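(* Let $n\in\{2,3\}$ and let $A=(a_{i,j})\in M_n(\mathcal F)$ be a supertropically nonsingular matrix whose characteristic polynomial $f_A(x)=\det(xI+A)$ has all coefficients tangible and which has $n$ distinct eigenvalues $\lambda_1,\dots,\lambda_n$. For each $k$, let $\lambda_k$ be the corner root of $f_A$ between two subsequent essential monomials $\alpha_{i_{k-1}}x^{n-i_{k-1}}$ and $\alpha_{i_k}x^{n-i_k}$, choose $t_k\in I_{\lambda_k}=\mathrm{Ind}_{i_k}\setminus \mathrm{Ind}_{i_{k-1}}$, and let $v_k$ be the tangible value of the $t_k$-th column of $\mathrm{adj}(A+\lambda_k I)$ (an eigenvector of $A$ for $\lambda_k$). Then $v_1,\dots,v_n$ are supertropically independent.
   Context: $\mathcal F=\mathcal T\cup\mathcal G\cup\{0_{\mathcal F}\}$ is the standard supertropical semifield: $\mathcal T$ is an ordered abelian group (e.g. $(\mathbb R,+)$, written multiplicatively), $\mathcal G=\{a^\nu: a\in\mathcal T\}$ is a copy of it (ghost elements), $\nu:\mathcal F\to\mathcal G\cup\{0_{\mathcal F}\}$ is the identity on $\mathcal G$ and $a\mapsto a^\nu$ on $\mathcal T$, $0_{\mathcal F}=-\infty$. Addition: $a+b$ is the one of $a,b$ of larger $\nu$-value if the $\nu$-values differ, and $a+b=a^\nu$ if $a^\nu=b^\nu$; multiplication is the group operation on $\nu$-values, the product being tangible iff both factors are tangible. For $a\in\mathcal F$, its tangible value $\hat a\in\mathcal T\cup\{0_{\mathcal F}\}$ is the tangible element with $\hat a^\nu=a^\nu$ (applied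 entrywise to vectors). $\det(A)=\sum_{\sigma\in S_n}\prod_i a_{i,\sigma(i)}$; $A$ is supertropically nonsingular if $\det(A)\in\mathcal T$. $\mathrm{adj}(A)_{i,j}=\det$ of the minor of $A$ obtained by deleting row $j$ and column $i$. The characteristic polynomial is $f_A(x)=\det(xI+A)=\sum_{k=0}^n\alpha_kx^{n-k}$, where $\alpha_k$ is the sum of the determinants of all $k\times k$ principal submatrices; when $\alpha_k\in\mathcal T$, $\mathrm{Ind}_k\subseteq[n]$ denotes the index set (of size $k$) on which the unique dominant permutation giving $\alpha_k$ is attained ($\mathrm{Ind}_0=\emptyset$). A monomial is essential if it strictly dominates the polynomial at some point; corner roots are points where two subsequent essential tangible monomials are equal. Eigenvalues of $A$ are the tangible values of roots of $f_A$ (elements $r$ with $f_A(r)\in\mathcal G\cup\{0_{\mathcal F}\}$). Vectors $v_1,\dots,v_k\in\mathcal F^n$ are supertropically dependent if there are $a_1,\dots,a_k\in\mathcal T$ with every coordinate of $\sum a_iv_i$ in $\mathcal G\cup\{0_{\mathcal F}\}$, and independent otherwise. *)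

(* Defs.v *)
From HB Require Import structures.
From mathcomp Require Import all_boot all_order all_algebra all_fingroup.
Set Implicit Arguments. Unset Strict Implicit. Unset Printing Implicit Defensive.
Import Order.TTheory GRing.Theory Num.Theory.

(* The group T of the paper is written                                  *)
(* multiplicatively; here it is written additively (max-plus style):   *)
(* the paper's product a*b of tangibles is a + b, and a^m is a *+ m.    *)
Definition ordered_abelian_group (G : porderZmodType) : Prop :=
  (forall x y : G, (x <= y)%R || (y <= x)%R) /\
  (forall x y z : G, (x <= y)%R -> (x + z <= y + z)%R).

Section Supertropical.
Variable G : porderZmodType.
Local Open Scope ring_scope.

(* The standard supertropical semifield F = T u G u {0_F}. *)
Inductive stf : Type :=
| SZero : stf            (* 0_F = -oo *)
| STan : G -> stf
| SGh : G -> stf.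

(* nu-value; None stands for 0_F *)
Definition nuv (a : stf) : option G :=
  match a with SZero => None | STan x => Some x | SGh x => Some x end.

Definition tangible (a : stf) : bool := if a is STan _ then true else false.
Definition ghost0 (a : stf) : bool := ~~ tangible a.

Definition hat (a : stf) : stf :=
  match a with SZero => SZero | STan x => STan x | SGh x => STan x end.

Definition nu_lt (a b : stf) : bool :=
  match nuv a, nuv b with
  | None, Some _ => true
  | Some x, Some y => x < y
  | _, _ => false
  end.
Definition nu_eq (a b : stf) : bool := nuv a == nuv b.

Definition sadd (a b : stf) : stf :=
  match nuv a, nuv b with
  | None, _ => b
  | _, None => a
  | Some x, Some y => if x < y then b else if y < x then a else SGh x
  end.

Definition smul (a b : stf) : stf :=
  match a, b with
  | SZero, _ => SZero
  | _, SZero => SZero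
  | STan x, STan y => STan (x + y)%R
  | STan x, SGh y | SGh x, STan y | SGh x, SGh y => SGh (x + y)%R
  end.

Definition sone : stf := STan 0%R.

Fixpoint spow (a : stf) (m : nat) : stf :=
  match m with 0 => sone | m'.+1 => smul a (spow a m') end.

Variable n : nat.

Definition sdet m (A : 'M[stf]_m) : stf :=
  \big[sadd/SZero]_(s : 'S_m) \big[smul/sone]_(i < m) A i (s i).

(* the increasing enumeration of [n] \ {i} *)
Definition st_skip (i : 'I_n) (r : 'I_n.-1) : 'I_n := insubd i (bump i r).

Definition st_minor (A : 'M[stf]_n) (i j : 'I_n) : 'M[stf]_n.-1 :=
  \matrix_(r, c) A (st_skip i r) (st_skip j c).

(* adj(A)_{i,j} = det of the minor deleting row j and column i *)
Definition sadj (A : 'M[stf]_n) : 'M[stf]_n :=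
  \matrix_(i, j) sdet (st_minor A j i).

Definition st_addscal (A : 'M[stf]_n) (l : stf) : 'M[stf]_n :=
  \matrix_(i, j) if i == j then sadd (A i j) l else A i j.

(* term of the determinant of the principal submatrix on S, for the
   permutation s of S (s : 'S_n with support in S) *)
Definition st_pterm (A : 'M[stf]_n) (S : {set 'I_n}) (s : 'S_n) : stf :=
  \big[smul/sone]_(i in S) A i (s i).

Definition st_pdet (A : 'M[stf]_n) (S : {set 'I_n}) : stf :=
  \big[sadd/SZero]_(s : 'S_n | perm_on S s) st_pterm A S s.

Definition st_alpha (A : 'M[stf]_n) (k : nat) : stf :=
  \big[sadd/SZero]_(S : {set 'I_n} | #|S| == k) st_pdet A S.

Definition st_monom (A : 'M[stf]_n) (k : nat) (x : stf) : stf :=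
  smul (st_alpha A k) (spow x (n - k)).
Definition charpoly_eval (A : 'M[stf]_n) (x : stf) : stf :=
  \big[sadd/SZero]_(k < n.+1) st_monom A k x.

(* S is the index set of a dominant (i.e. nu-maximal) permutation for alpha_k;
   when alpha_k is tangible this dominant permutation is unique *)
Definition is_Ind (A : 'M[stf]_n) (k : nat) (S : {set 'I_n}) : bool :=
  (#|S| == k) && [exists s : 'S_n, perm_on S s && nu_eq (st_pterm A S s) (st_alpha A k)].

(* Ind_k (meaningful when alpha_k is tangible) *)
Definition st_Ind (A : 'M[stf]_n) (k : nat) : {set 'I_n} :=
  odflt set0 [pick S : {set 'I_n} | is_Ind A k S].

Definition st_essential (A : 'M[stf]_n) (k : nat) : Prop :=
  exists x : G, forall j, (j <= n)%N -> j != k ->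
    nu_lt (st_monom A j (STan x)) (st_monom A k (STan x)).

Definition st_eigenvalue (A : 'M[stf]_n) (l : G) : Prop :=
  ghost0 (charpoly_eval A (STan l)).

Definition st_dependent (m : nat) (v : nat -> 'cV[stf]_n) : Prop :=
  exists a : nat -> G, forall j : 'I_n,
    ghost0 (\big[sadd/SZero]_(1 <= k < m.+1) smul (STan (a k)) (v k j 0)).
Definition st_independent (m : nat) (v : nat -> 'cV[stf]_n) : Prop :=
  ~ st_dependent m v.

End Supertropical.

(* Main.v *)
Require Import Defs.
From HB Require Import structures.
From mathcomp Require Import all_boot all_order all_algebra all_fingroup.
From mathcomp Require Import zify.
Import Order.TTheory GRing.Theory Num.Theory.

Module PropHelpers.
Set Implicit Arguments. Unset Strict Implicit.
Local Open Scope ring_scope.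

Section OG.
Variable G : porderZmodType.
Hypothesis hG : ordered_abelian_group G.

Lemma og_total (x y : G) : (x <= y) || (y <= x). Proof. exact: hG.1. Qed.
Lemma og_leD2r (x y z : G) : x <= y -> x + z <= y + z. Proof. exact: hG.2. Qed.
Lemma og_leD2rE (x y z : G) : (x + z <= y + z) = (x <= y).
Proof.
apply/idP/idP; last exact: og_leD2r.
by move/(@og_leD2r _ _ (- z)); rewrite !addrK.
Qed.
Lemma og_ltD2rE (x y z : G) : (x + z < y + z) = (x < y).
Proof. by rewrite !lt_def og_leD2rE (inj_eq (addIr z)). Qed.
Lemma og_leD (x y z w : G) : x <= y -> z <= w -> x + z <= y + w.
Proof.
move=> h1 h2; apply: (le_trans (y := y + z)); first by rewrite og_leD2rE.
by rewrite ![y + _]addrC og_leD2rE.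
Qed.
Lemma og_ltD (x y z w : G) : x < y -> z <= w -> x + z < y + w.
Proof.
move=> h1 h2; apply: (lt_le_trans (y := y + z)); first by rewrite og_ltD2rE.
by rewrite ![y + _]addrC og_leD2rE.
Qed.
Lemma og_leltD (x y z w : G) : x <= y -> z < w -> x + z < y + w.
Proof. by move=> h1 h2; rewrite addrC [y + _]addrC; apply: og_ltD. Qed.
Lemma og_subr_gt0 (x y : G) : (0 < y - x) = (x < y).
Proof. by rewrite -(og_ltD2rE 0 (y - x) x) add0r subrK. Qed.
Lemma og_subr_ge0 (x y : G) : (0 <= y - x) = (x <= y).
Proof. by rewrite -(og_leD2rE 0 (y - x) x) add0r subrK. Qed.
Lemma og_ltNge (x y : G) : (x < y) = ~~ (y <= x).
Proof.
case: (boolP (y <= x)) => h /=.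
  by apply/negP => h'; have := lt_le_trans h' h; rewrite ltxx.
by rewrite lt_neqAle; case/orP: (og_total x y) h => -> //; rewrite andbT;
  apply: contra => /eqP ->.
Qed.

Inductive lexp := LAt of nat | LZ | LAdd of lexp & lexp | LOpp of lexp
  | LMuln of lexp & nat | LMulz of lexp & int.

Fixpoint den (e : seq G) (t : lexp) : G :=
  match t with
  | LAt i => nth 0 e i
  | LZ => 0
  | LAdd a b => den e a + den e b
  | LOpp a => - den e a
  | LMuln a k => den e a *+ k
  | LMulz a k => den e a *~ k
  end.

Fixpoint addv (c1 c2 : seq int) : seq int :=
  match c1, c2 with
  | k1 :: c1', k2 :: c2' => (k1 + k2) :: addv c1' c2'
  | [::], c => c
  | c, [::] => c
  end.
Definition scalev (k : int) (c : seq int) := map (fun x => x * k) c.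
Definition unitv (i : nat) : seq int := rcons (nseq i 0) 1.

Fixpoint norm (t : lexp) : seq int :=
  match t with
  | LAt i => unitv i
  | LZ => [::]
  | LAdd a b => addv (norm a) (norm b)
  | LOpp a => scalev (-1) (norm a)
  | LMuln a k => scalev k%:Z (norm a)
  | LMulz a k => scalev k (norm a)
  end.

Fixpoint ev (e : seq G) (c : seq int) : G :=
  match e, c with
  | x :: e', k :: c' => x *~ k + ev e' c'
  | _, _ => 0
  end.

Lemma ev_addv e c1 c2 : ev e (addv c1 c2) = ev e c1 + ev e c2.
Proof.
elim: e c1 c2 => [|x e IH] [|k1 c1] [|k2 c2] //=; rewrite ?addr0 ?add0r //.
by rewrite IH mulrzDr addrACA.
Qed.
Lemma ev_scalev e k c : ev e (scalev k c) = ev e c *~ k.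
Proof.
elim: e c => [|x e IH] [|a c] //=; rewrite ?mul0rz //.
by rewrite IH mulrzDl mulrzA.
Qed.
Lemma ev_nil e : ev e [::] = 0. Proof. by case: e. Qed.
Lemma ev_unitv e i : ev e (unitv i) = nth 0 e i.
Proof.
elim: e i => [|x e IH] [|i] //=; first by rewrite ev_nil mulr1z addr0.
rewrite /unitv /= in IH *.
by rewrite mulr0z add0r IH.
Qed.

Lemma den_norm e t : den e t = ev e (norm t).
Proof.
elim: t => [i||a Ha b Hb|a Ha|a Ha k|a Ha k] /=.
- by rewrite ev_unitv.
- by rewrite ev_nil.
- by rewrite ev_addv Ha Hb.
- by rewrite ev_scalev Ha mulrN1z.
- by rewrite ev_scalev Ha -pmulrn.
- by rewrite ev_scalev Ha.
Qed.

Lemma ev_zero e c : all (fun x => x == 0) c -> ev e c = 0.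
Proof.
elim: e c => [|x e IH] [|a c] //= /andP[/eqP -> /IH ->].
by rewrite mulr0z addr0.
Qed.

Record lfact := LF { lf_l : lexp; lf_r : lexp; lf_s : bool }.
Definition lholds e f :=
  if lf_s f then den e (lf_l f) < den e (lf_r f) else den e (lf_l f) <= den e (lf_r f).
Definition lgap f := addv (norm (lf_r f)) (scalev (-1) (norm (lf_l f))).
Fixpoint limp e (hs : seq lfact) (g : lfact) : Prop :=
  match hs with
  | [::] => lholds e g
  | h :: hs' => lholds e h -> limp e hs' g
  end.
Definition lcheck (hs : seq lfact) (g : lfact) : bool :=
  all (fun x => x == 0)
    (addv (lgap g) (scalev (-1) (foldr addv [::] (map lgap hs))))
  && (lf_s g ==> has lf_s hs).

Lemma ev_lgap e f : ev e (lgap f) = den e (lf_r f) - den e (lf_l f).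
Proof. by rewrite /lgap ev_addv ev_scalev !den_norm mulrN1z. Qed.

Fixpoint lall e (hs : seq lfact) : Prop :=
  if hs is h :: hs' then lholds e h /\ lall e hs' else True.

Lemma limp_of e (hs : seq lfact) g :
  (lall e hs -> lholds e g) -> limp e hs g.
Proof.
elim: hs => [|h hs IH] /= H; first by apply: H.
by move=> Hh; apply: IH => Hf; apply: H.
Qed.

Lemma sum_gap e (hs : seq lfact) : lall e hs ->
   if has lf_s hs then 0 < ev e (foldr addv [::] (map lgap hs))
   else 0 <= ev e (foldr addv [::] (map lgap hs)).
Proof.
elim: hs => [|h hs IH] /=; first by rewrite ev_nil.
move=> [Hh /IH {}IH].
rewrite ev_addv ev_lgap.
move: Hh; rewrite /lholds; case: (lf_s h) => /= Hh.
  rewrite -og_subr_gt0 in Hh.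
  case: (has lf_s hs) IH => IH.
    by rewrite -(addr0 0); apply: og_ltD => //; exact: ltW.
  by rewrite -(addr0 0); apply: og_ltD.
rewrite -og_subr_ge0 in Hh.
case: (has lf_s hs) IH => IH.
  by rewrite -(add0r 0); apply: og_leltD.
by rewrite -(add0r 0); apply: og_leD.
Qed.

Lemma limp_sound e (hs : seq lfact) g : lcheck hs g -> limp e hs g.
Proof.
rewrite /lcheck => /andP[Hz Hs].
have E : ev e (lgap g) = ev e (foldr addv [::] (map lgap hs)).
  apply/eqP; rewrite -subr_eq0 -mulrN1z -ev_scalev -ev_addv.
  by apply/eqP/ev_zero.
apply: limp_of => H; have := @sum_gap e hs H; rewrite -E ev_lgap /lholds.
move: Hs; case: (lf_s g) => /= Hs.
  by rewrite Hs og_subr_gt0.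
by case: (has lf_s hs) => [/ltW|]; rewrite og_subr_ge0.
Qed.
End OG.

Ltac lin_addenv env t :=
  lazymatch env with
  | tt => constr:(t :: nil)
  | nil => constr:(t :: nil)
  | (t :: _) => env
  | (?x :: ?r) => let r' := lin_addenv r t in constr:(x :: r')
  end.
Ltac lin_idx env t :=
  lazymatch env with
  | (t :: _) => constr:(0%nat)
  | (_ :: ?r) => let j := lin_idx r t in constr:(S j)
  end.
Ltac lin_collect env t :=
  lazymatch t with
  | @GRing.add _ ?a ?b => let e1 := lin_collect env a in lin_collect e1 b
  | @GRing.opp _ ?a => lin_collect env a
  | @GRing.zero _ => env
  | @GRing.natmul _ ?a _ => lin_collect env a
  | @intmul _ ?a _ => lin_collect env a
  | _ => lin_addenv env t
  end.
Ltac lin_reify env t :=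
  lazymatch t with
  | @GRing.add _ ?a ?b => let x := lin_reify env a in let y := lin_reify env b in
                          constr:(LAdd x y)
  | @GRing.opp _ ?a => let x := lin_reify env a in constr:(LOpp x)
  | @GRing.zero _ => constr:(LZ)
  | @GRing.natmul _ ?a ?k => let x := lin_reify env a in constr:(LMuln x k)
  | @intmul _ ?a ?k => let x := lin_reify env a in constr:(LMulz x k)
  | _ => let i := lin_idx env t in constr:(LAt i)
  end.
Ltac lin_collect_goal env g :=
  lazymatch g with
  | is_true (@Order.lt _ _ ?a ?b) -> ?g' =>
      let e1 := lin_collect env a in let e2 := lin_collect e1 b in
      lin_collect_goal e2 g'
  | is_true (@Order.le _ _ ?a ?b) -> ?g' =>
      let e1 := lin_collect env a in let e2 := lin_collect e1 b in
      lin_collect_goal e2 g'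
  | is_true (@Order.lt _ _ ?a ?b) =>
      let e1 := lin_collect env a in lin_collect e1 b
  | is_true (@Order.le _ _ ?a ?b) =>
      let e1 := lin_collect env a in lin_collect e1 b
  end.
Ltac lin_fact env g :=
  lazymatch g with
  | is_true (@Order.lt _ _ ?a ?b) =>
      let x := lin_reify env a in let y := lin_reify env b in constr:(LF x y true)
  | is_true (@Order.le _ _ ?a ?b) =>
      let x := lin_reify env a in let y := lin_reify env b in constr:(LF x y false)
  end.
Ltac lin_hyps env g :=
  lazymatch g with
  | ?h -> ?g' => let f := lin_fact env h in let r := lin_hyps env g' in
                 constr:(f :: r)
  | _ => constr:(@nil lfact)
  end.
Ltac lin_concl env g :=
  lazymatch g with
  | _ -> ?g' => lin_concl env g'
  | _ => lin_fact env g
  end.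
(* goal : h1 -> ... -> hn -> concl, all linear (in)equalities in G *)
Ltac lin_close hG :=
  match goal with |- ?g =>
    let env := lin_collect_goal tt g in
    let hs := lin_hyps env g in
    let c := lin_concl env g in
    change (@limp _ env hs c);
    apply: (@limp_sound _ hG); vm_compute; reflexivity
  end.



Section SmulLaw.
Variable G : porderZmodType.
Lemma smulA : associative (@smul G).
Proof. by case=> [|x|x] [|y|y] [|z|z] //=; rewrite addrA. Qed.
Lemma smulC : commutative (@smul G).
Proof. by case=> [|x|x] [|y|y] //=; rewrite addrC. Qed.
Lemma smul1m : left_id (@sone G) (@smul G).
Proof. by case=> [|x|x] //=; rewrite add0r. Qed.
End SmulLaw.
HB.instance Definition _ (G : porderZmodType) :=
  Monoid.isComLaw.Build (stf G) (@sone G) (@smul G) (@smulA G) (@smulC G) (@smul1m G).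

Section Ext.
Variable G : porderZmodType.
Hypothesis hG : ordered_abelian_group G.


Definition oadd (x y : option G) : option G :=
  match x, y with Some a, Some b => Some (a + b) | _, _ => None end.
Definition omax (x y : option G) : option G :=
  match x, y with
  | None, _ => y | _, None => x
  | Some a, Some b => Some (if a < b then b else a) end.
Definition ole (x y : option G) : bool :=
  match x, y with
  | None, _ => true | Some _, None => false | Some a, Some b => a <= b end.
Definition olt (x y : option G) : bool :=
  match x, y with
  | _, None => false | None, Some _ => true | Some a, Some b => a < b end.

Lemma ole_refl x : ole x x. Proof. by case: x => //= x. Qed.
Lemma ole_trans y x z : ole x y -> ole y z -> ole x z.
Proof. by case: x => [x|] // ; case: y => [y|] //; case: z => [z|] //=; apply: le_trans. Qed.
Lemma olt_le_trans y x z : olt x y -> ole y z -> olt x z.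
Proof. by case: x => [x|]; case: y => [y|]; case: z => [z|] //=; apply: lt_le_trans. Qed.
Lemma ole_lt_trans y x z : ole x y -> olt y z -> olt x z.
Proof. by case: x => [x|]; case: y => [y|]; case: z => [z|] //=; apply: le_lt_trans. Qed.
Lemma oltW x y : olt x y -> ole x y.
Proof. by case: x => [x|]; case: y => [y|] //=; apply: ltW. Qed.
Lemma olt_ngt x y : olt x y -> ~~ ole y x.
Proof.
case: x => [x|]; case: y => [y|] //= h; apply/negP => h'.
by have := lt_le_trans h h'; rewrite ltxx.
Qed.
Lemma ole_nlt x y : ~~ olt x y -> ole y x.
Proof.
case: x => [x|]; case: y => [y|] //=; rewrite (og_ltNge hG) negbK //.
Qed.

Lemma ole_omaxl x y : ole x (omax x y).
Proof.
case: x => [x|] //; case: y => [y|] /=; last exact: le_refl.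
by case: ifP => // /ltW.
Qed.
Lemma ole_omaxr x y : ole y (omax x y).
Proof.
case: x => [x|]; case: y => [y|] //=; try exact: le_refl.
by case: ifP => // /negbT; rewrite (og_ltNge hG) negbK.
Qed.
Lemma omax_le x y z : ole x z -> ole y z -> ole (omax x y) z.
Proof. by case: x => [x|]; case: y => [y|] //=; case: ifP. Qed.
Lemma omax_lt x y z : olt x z -> olt y z -> olt (omax x y) z.
Proof. by case: x => [x|]; case: y => [y|]; case: z => [z|] //=; case: ifP. Qed.
Lemma oadd_le x y z w : ole x y -> ole z w -> ole (oadd x z) (oadd y w).
Proof.
case: x => [x|]; case: y => [y|]; case: z => [z|]; case: w => [w|] //=.
exact: og_leD.
Qed.
Lemma oadd_omaxl a b c : oadd (omax a b) c = omax (oadd a c) (oadd b c).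
Proof.
case: a => [a|]; case: b => [b|]; case: c => [c|] //=.
by rewrite (og_ltD2rE hG); case: ifP.
Qed.
Lemma oadd_omaxr a b c : oadd c (omax a b) = omax (oadd c a) (oadd c b).
Proof.
case: a => [a|]; case: b => [b|]; case: c => [c|] //=.
by rewrite ![c + _]addrC (og_ltD2rE hG); case: ifP.
Qed.
Lemma oaddC a b : oadd a b = oadd b a.
Proof. by case: a => [a|]; case: b => [b|] //=; rewrite addrC. Qed.
Lemma oaddA a b c : oadd a (oadd b c) = oadd (oadd a b) c.
Proof. by case: a => [a|]; case: b => [b|]; case: c => [c|] //=; rewrite addrA. Qed.

Lemma nuv_sadd (a b : stf G) : nuv (sadd a b) = omax (nuv a) (nuv b).
Proof.
rewrite /sadd; case: a => [|x|x]; case: b => [|y|y] //=;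
  by case: ifP => // _; case: ifP.
Qed.
Lemma nuv_smul (a b : stf G) : nuv (smul a b) = oadd (nuv a) (nuv b).
Proof. by case: a => [|x|x]; case: b => [|y|y]. Qed.
Lemma nuv_hat (a : stf G) : nuv (hat a) = nuv a. Proof. by case: a. Qed.

Lemma tangible_sadd (a b : stf G) : tangible (sadd a b) ->
  (tangible a /\ olt (nuv b) (nuv a)) \/ (tangible b /\ olt (nuv a) (nuv b)).
Proof.
rewrite /sadd; case: a => [|x|x]; case: b => [|y|y] //=; try by [left|right].
all: case: ifP => h1; first by [right]; case: ifP => h2 //; by left.
Qed.

Lemma tangible_nz (a : stf G) : tangible a -> nuv a <> None.
Proof. by case: a. Qed.

Section Big.
Variables (I : eqType) (P : pred I) (F : I -> stf G).

Lemma nle_big (r : seq I) i : i \in r -> P i ->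
  ole (nuv (F i)) (nuv (\big[@sadd G/@SZero G]_(j <- r | P j) F j)).
Proof.
elim: r => [|x r IH] //; rewrite inE big_cons => /orP[/eqP <-|Hi] Pi.
  by rewrite Pi nuv_sadd ole_omaxl.
case: ifP => _; last exact: IH.
by rewrite nuv_sadd; apply: ole_trans (IH Hi Pi) (ole_omaxr _ _).
Qed.

Lemma nbig_le (r : seq I) b : (forall j, j \in r -> P j -> ole (nuv (F j)) b) ->
  ole (nuv (\big[@sadd G/@SZero G]_(j <- r | P j) F j)) b.
Proof.
elim: r => [|x r IH] H; first by rewrite big_nil.
rewrite big_cons; have IH' := IH (fun j Hj => H j (@mem_behead _ (x :: r) j Hj)).
case: ifP => Px //; rewrite nuv_sadd; apply: omax_le => //.
exact: H (mem_head _ _) Px.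
Qed.

Lemma nbig_uniq (r : seq I) i : uniq r ->
  tangible (\big[@sadd G/@SZero G]_(j <- r | P j) F j) -> i \in r -> P i ->
  nuv (F i) = nuv (\big[@sadd G/@SZero G]_(j <- r | P j) F j) ->
  forall j, j \in r -> P j -> j != i ->
  olt (nuv (F j)) (nuv (\big[@sadd G/@SZero G]_(j <- r | P j) F j)).
Proof.
elim: r => [|x r IH] //= /andP[xr ur]; rewrite big_cons.
case: ifP => Px; last first.
  move=> Ht; rewrite inE => /orP[/eqP -> |Hi]; first by rewrite Px.
  move=> Pi E j; rewrite inE => /orP[/eqP -> |Hj]; first by rewrite Px.
  exact: IH.
move=> /tangible_sadd [[Ht Hlt]|[Ht Hlt]].
  have Ex : nuv (sadd (F x) (\big[@sadd G/@SZero G]_(j <- r | P j) F j)) = nuv (F x).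
    rewrite nuv_sadd; move: Hlt; case: (nuv (F x)) => [a|]; 
      case: (nuv (\big[@sadd G/@SZero G]_(j <- r | P j) F j)) => [b|] //= h.
    by rewrite (og_ltNge hG) (ltW h).
  rewrite Ex inE => /orP[/eqP -> |Hi] Pi.
    move=> _ j; rewrite inE => /orP[/eqP ->|Hj] Pj; first by rewrite eqxx.
    by move=> _; apply: ole_lt_trans Hlt; exact: nle_big.
  move=> Ei; have := nle_big Hi Pi; rewrite Ei => h.
  by have := olt_ngt Hlt; rewrite h.
have Ex : nuv (sadd (F x) (\big[@sadd G/@SZero G]_(j <- r | P j) F j)) =
          nuv (\big[@sadd G/@SZero G]_(j <- r | P j) F j).
  rewrite nuv_sadd; move: Hlt; case: (nuv (F x)) => [a|];
    case: (nuv (\big[@sadd G/@SZero G]_(j <- r | P j) F j)) => [b|] //= h.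
  by rewrite h.
rewrite Ex inE => /orP[/eqP -> |Hi] Pi.
  by move=> E; move: Hlt; rewrite E => /olt_ngt; rewrite ole_refl.
move=> Ei j; rewrite inE => /orP[/eqP ->|Hj] Pj ji; first exact: Hlt.
exact: IH ur Ht Hi Pi Ei j Hj Pj ji.
Qed.
End Big.
End Ext.

Section H.
Variable G : porderZmodType.
Hypothesis hG : ordered_abelian_group G.

Lemma ole_anti (x y : option G) : ole x y -> ole y x -> x = y.
Proof.
case: x => [x|]; case: y => [y|] //= h1 h2.
by congr Some; apply/eqP; rewrite eq_le h1 h2.
Qed.

Lemma sadd_tl (a b : stf G) : tangible a -> olt (nuv b) (nuv a) ->
  tangible (sadd a b) /\ nuv (sadd a b) = nuv a.
Proof.
rewrite /sadd; case: a => [|x|x] //; case: b => [|y|y] //= _ h;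
  by rewrite (og_ltNge hG) (ltW h) /= h.
Qed.
Lemma sadd_tr (a b : stf G) : tangible b -> olt (nuv a) (nuv b) ->
  tangible (sadd a b) /\ nuv (sadd a b) = nuv b.
Proof.
by rewrite /sadd; case: a => [|x|x] //; case: b => [|y|y] //= _ h; rewrite h.
Qed.

Section BigT.
Variables (I : eqType) (P : pred I) (F : I -> stf G).
Lemma nbig_lt (r : seq I) b : b != None ->
  (forall j, j \in r -> P j -> olt (nuv (F j)) b) ->
  olt (nuv (\big[@sadd G/@SZero G]_(j <- r | P j) F j)) b.
Proof.
move=> bn; elim: r => [|x r IH] H; first by rewrite big_nil; move: bn H; case: b.
rewrite big_cons; have IH' := IH (fun j Hj => H j (@mem_behead _ (x :: r) j Hj)).
case: ifP => Px //; rewrite nuv_sadd; apply: omax_lt => //.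
exact: H (mem_head _ _) Px.
Qed.

Lemma nbig_tangible (r : seq I) i :
  uniq r -> i \in r -> P i -> tangible (F i) ->
  (forall j, j \in r -> P j -> j != i -> olt (nuv (F j)) (nuv (F i))) ->
  tangible (\big[@sadd G/@SZero G]_(j <- r | P j) F j) /\
  nuv (\big[@sadd G/@SZero G]_(j <- r | P j) F j) = nuv (F i).
Proof.
elim: r => [|x r IH] //= /andP[xr ur]; rewrite big_cons inE.
move=> /orP[/eqP Ei|Hi] Pi Ti H.
  subst x; rewrite Pi; apply: sadd_tl => //; apply: nbig_lt.
    by case: (F i) Ti.
  move=> j Hj Pj; apply: H; first by rewrite inE Hj orbT.
    by [].
  by apply: contraNneq xr => <-.
have [IH1 IH2] := IH ur Hi Pi Ti
  (fun j Hj Pj ji => H j (@mem_behead _ (x :: r) j Hj) Pj ji).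
case: ifP => Px; last by split.
have xi : x != i by apply: contraNneq xr => ->.
have := H x (mem_head _ _) Px xi; rewrite -IH2 => Hlt.
by have [T E] := sadd_tr IH1 Hlt; split => //; rewrite E IH2.
Qed.
End BigT.
End H.

Section P.
Variable G : porderZmodType.
Hypothesis hG : ordered_abelian_group G.
Variable n : nat.
Variable A : 'M[stf G]_n.

Lemma Ind_spec k x : x \in st_Ind A k -> is_Ind A k (st_Ind A k).
Proof. by rewrite /st_Ind; case: pickP => [S HS|] //=; rewrite inE. Qed.

Lemma is_Ind_P k (S : {set 'I_n}) : is_Ind A k S ->
  #|S| = k /\ exists s, perm_on S s /\ nuv (st_pterm A S s) = nuv (st_alpha A k).
Proof.
by case/andP => /eqP -> /existsP [s /andP[Ps /eqP E]]; split => //; exists s.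
Qed.

Lemma pterm_le_pdet (S : {set 'I_n}) (s : 'S_n) : perm_on S s ->
  ole (nuv (st_pterm A S s)) (nuv (st_pdet A S)).
Proof. by move=> Ps; apply: (nle_big hG) => //; exact: mem_index_enum. Qed.

Lemma pdet_le_alpha (S : {set 'I_n}) : ole (nuv (st_pdet A S)) (nuv (st_alpha A #|S|)).
Proof. by apply: (nle_big hG) => //; exact: mem_index_enum. Qed.

Lemma pterm_le_alpha (S : {set 'I_n}) (s : 'S_n) : perm_on S s ->
  ole (nuv (st_pterm A S s)) (nuv (st_alpha A #|S|)).
Proof. by move=> Ps; apply: ole_trans (pterm_le_pdet Ps) (pdet_le_alpha S). Qed.

Lemma alpha_unique k (S : {set 'I_n}) (s : 'S_n) (S' : {set 'I_n}) (s' : 'S_n) : tangible (st_alpha A k) ->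
  #|S| = k -> perm_on S s -> nuv (st_pterm A S s) = nuv (st_alpha A k) ->
  #|S'| = k -> S' != S -> perm_on S' s' ->
  olt (nuv (st_pterm A S' s')) (nuv (st_alpha A k)).
Proof.
move=> Ht cS Ps E cS' nS Ps'.
have E2 : nuv (st_pdet A S) = nuv (st_alpha A k).
  apply: ole_anti; first by rewrite -cS; exact: pdet_le_alpha.
  by rewrite -E; exact: pterm_le_pdet.
apply: ole_lt_trans (pterm_le_pdet Ps') _.
apply: (nbig_uniq hG (i := S)) => //.
- exact: index_enum_uniq.
- exact: mem_index_enum.
- by rewrite cS.
- exact: mem_index_enum.
- by rewrite cS'.
Qed.

Lemma pterm1 (a : 'I_n) (s : 'S_n) : st_pterm A [set a] s = A a (s a).
Proof. by rewrite /st_pterm big_set1. Qed.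
Lemma pterm2 (a b : 'I_n) (s : 'S_n) : a != b -> st_pterm A [set a; b] s = smul (A a (s a)) (A b (s b)).
Proof.
move=> ab; rewrite /st_pterm big_setU1 /=; last by rewrite inE.
by rewrite big_set1.
Qed.

Lemma pterm_split (S : {set 'I_n}) (a : 'I_n) (s : 'S_n) : a \in S ->
  st_pterm A S s = smul (A a (s a)) (st_pterm A (S :\ a) s).
Proof. by move=> aS; rewrite /st_pterm (big_setD1 a aS). Qed.

Lemma perm_onT (s : 'S_n) : perm_on [set: 'I_n] s.
Proof. by apply/subsetP => z _; rewrite inE. Qed.

Lemma perm_on1_fix (a : 'I_n) (s : 'S_n) : perm_on [set a] s -> s a = a.
Proof. by move=> Ps; have := perm_closed a Ps; rewrite !inE eqxx => /eqP. Qed.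

Lemma perm_on2_cases (a b : 'I_n) (s : 'S_n) : a != b -> perm_on [set a; b] s ->
  (s a = a /\ s b = b) \/ (s a = b /\ s b = a).
Proof.
move=> ab Ps; have Ha := perm_closed a Ps; have Hb := perm_closed b Ps.
rewrite !inE !eqxx /= orbT in Ha Hb.
case/orP: Ha => /eqP Ha; case/orP: Hb => /eqP Hb.
- by have /eqP := perm_inj (etrans Ha (esym Hb)); rewrite (negbTE ab).
- by left.
- by right.
- by have /eqP := perm_inj (etrans Ha (esym Hb)); rewrite (negbTE ab).
Qed.
End P.

Section P3.
Variable G : porderZmodType.
Hypothesis hG : ordered_abelian_group G.
Variable A : 'M[stf G]_3.

Lemma setT3 (a b c : 'I_3) : a != b -> a != c -> b != c -> [set: 'I_3] = [set a; b; c].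
Proof.
move=> ab ac bc; apply/eqP; rewrite eq_sym eqEcard subsetT cardsT card_ord.
rewrite -setUA cardsU1 cards2 bc !inE negb_or ab ac.
by [].
Qed.

Lemma pterm3 (a b c : 'I_3) (s : 'S_3) : a != b -> a != c -> b != c ->
  st_pterm A [set: 'I_3] s = smul (A a (s a)) (smul (A b (s b)) (A c (s c))).
Proof.
move=> ab ac bc; rewrite /st_pterm (setT3 ab ac bc) -setUA big_setU1 /=; last first.
  by rewrite !inE negb_or ab ac.
by rewrite big_setU1 ?inE //= big_set1.
Qed.
End P3.

Section B3.
Variable G : porderZmodType.
Hypothesis hG : ordered_abelian_group G.
Variable A : 'M[stf G]_3.

Lemma alpha0_3 : nuv (st_alpha A 0) = Some 0.
Proof.
apply: ole_anti.
  rewrite /st_alpha; apply: nbig_le => S _ /eqP /cards0_eq ->.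
  rewrite /st_pdet; apply: nbig_le => s _ _; rewrite /st_pterm big_set0 /=; exact: le_refl.
have := pterm_le_alpha hG A (perm_on1 set0); rewrite cards0 /st_pterm big_set0.
by [].
Qed.

Lemma eq_of_les (x y : G) : x <= y -> y <= x -> x = y.
Proof. by move=> h1 h2; apply/eqP; rewrite eq_le h1 h2. Qed.

Lemma partB3
  (halpha : forall k, (k <= 3)%N -> tangible (st_alpha A k))
  (lam : nat -> G)
  (i : nat -> nat) (hi0 : i 0%N = 0%N)
  (hiess : forall k, (k <= 3)%N -> (i k <= 3)%N /\ st_essential A (i k))
  (hinc : forall k, (1 <= k <= 3)%N -> (i k.-1 < i k)%N)
  (hcorner : forall k, (1 <= k <= 3)%N ->
     nu_eq (st_monom A (i k.-1) (STan (lam k))) (st_monom A (i k) (STan (lam k))))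
  (t : nat -> 'I_3)
  (ht : forall k, (1 <= k <= 3)%N -> t k \in st_Ind A (i k) :\: st_Ind A (i k.-1)) :
  let x := fun a b => nuv (A (t a) (t b)) in
  exists A1 A2 A3 : G,
  [/\ t 1%N != t 2%N, t 1%N != t 3%N & t 2%N != t 3%N] /\
  [/\ lam 1%N = A1, lam 2%N = A2 - A1 & lam 3%N = A3 - A2] /\
  [/\ x 1%N 1%N = Some A1, olt (x 2%N 2%N) (Some A1) & olt (x 3%N 3%N) (Some A1)] /\
  [/\ ole (oadd (x 1%N 1%N) (x 2%N 2%N)) (Some A2), ole (oadd (x 1%N 2%N) (x 2%N 1%N)) (Some A2)
      & olt (oadd (x 1%N 1%N) (x 3%N 3%N)) (Some A2)] /\
  [/\ olt (oadd (x 1%N 3%N) (x 3%N 1%N)) (Some A2),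
      olt (oadd (x 2%N 2%N) (x 3%N 3%N)) (Some A2) & olt (oadd (x 2%N 3%N) (x 3%N 2%N)) (Some A2)] /\
  [/\ ole (oadd (x 1%N 1%N) (oadd (x 2%N 2%N) (x 3%N 3%N))) (Some A3),
      ole (oadd (x 1%N 1%N) (oadd (x 2%N 3%N) (x 3%N 2%N))) (Some A3) &
      ole (oadd (x 1%N 3%N) (oadd (x 2%N 2%N) (x 3%N 1%N))) (Some A3)] /\
  [/\ ole (oadd (x 1%N 2%N) (oadd (x 2%N 1%N) (x 3%N 3%N))) (Some A3),
      ole (oadd (x 1%N 2%N) (oadd (x 2%N 3%N) (x 3%N 1%N))) (Some A3) &
      ole (oadd (x 1%N 3%N) (oadd (x 2%N 1%N) (x 3%N 2%N))) (Some A3)] /\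
  [/\ A2 < A1 *+ 2, A3 + A1 < A2 *+ 2 &
      ole (Some A2) (omax (oadd (x 1%N 1%N) (x 2%N 2%N)) (oadd (x 1%N 2%N) (x 2%N 1%N)))].
Proof.
move=> x.
have [i1 [i2 i3]] : [/\ i 1%N = 1%N, i 2%N = 2%N & i 3%N = 3%N].
  have h1 := hinc 1%N isT; have h2 := hinc 2%N isT; have h3 := hinc 3%N isT.
  have [h4 _] := hiess 3%N isT; simpl in h1, h2, h3; split; lia.
have [A1 EA1] : exists a, st_alpha A 1 = STan a.
  by move: (halpha 1%N isT); case: (st_alpha A 1) => // a _; exists a.
have [A2 EA2] : exists a, st_alpha A 2 = STan a.
  by move: (halpha 2%N isT); case: (st_alpha A 2) => // a _; exists a.
have [A3 EA3] : exists a, st_alpha A 3 = STan a.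
  by move: (halpha 3%N isT); case: (st_alpha A 3) => // a _; exists a.
have EA0 := alpha0_3.
have hc1 := hcorner 1%N isT; have hc2 := hcorner 2%N isT; have hc3 := hcorner 3%N isT.
rewrite /= hi0 i1 i2 i3 /nu_eq /st_monom !nuv_smul EA1 EA2 EA3 EA0 /= in hc1 hc2 hc3.
move/eqP: hc1 => [] /eqP; rewrite eq_le => /andP[c11 c12].
move/eqP: hc2 => [] /eqP; rewrite eq_le => /andP[c21 c22].
move/eqP: hc3 => [] /eqP; rewrite eq_le => /andP[c31 c32].
have L1 : lam 1%N = A1 by apply: eq_of_les; [move: c11 | move: c12]; lin_close hG.
have L2 : lam 2%N = A2 - A1 by apply: eq_of_les; [move: c21 | move: c22]; lin_close hG.
have L3 : lam 3%N = A3 - A2 by apply: eq_of_les; [move: c31 | move: c32]; lin_close hG.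
have [y1 Hy1] := (hiess 1%N isT).2; rewrite i1 in Hy1.
have [y2 Hy2] := (hiess 2%N isT).2; rewrite i2 in Hy2.
have e10 := Hy1 0%N isT isT; have e12 := Hy1 2%N isT isT.
have e21 := Hy2 1%N isT isT; have e23 := Hy2 3%N isT isT.
rewrite /nu_lt /st_monom !nuv_smul EA1 EA2 EA3 EA0 /= in e10 e12 e21 e23.
have f15 : A2 < A1 *+ 2 by move: e10 e12; lin_close hG.
have f16 : A3 + A1 < A2 *+ 2 by move: e21 e23; lin_close hG.
have ht1 := ht 1%N isT; rewrite /= i1 hi0 inE in ht1; case/andP: ht1 => _ Ht1.
have [cS1 [s1 [Ps1 Es1]]] := is_Ind_P (Ind_spec Ht1).
move: Ht1 cS1 Ps1 Es1; set S1 := st_Ind A 1 => Ht1 cS1 Ps1 Es1.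
have /cards1P [a Ea] : #|S1| == 1%N by rewrite cS1.
move: Ht1; rewrite Ea inE => /eqP Eta; subst a.
rewrite Ea in Ps1; move: Es1; rewrite Ea pterm1 (perm_on1_fix Ps1) EA1 => x11.
have ht2 := ht 2%N isT; rewrite /= i1 i2 inE in ht2; case/andP: ht2 => t2n Ht2.
rewrite -/S1 Ea inE in t2n.
have t12 : t 1%N != t 2%N by rewrite eq_sym.
have [cS2 [s2 [Ps2 Es2]]] := is_Ind_P (Ind_spec Ht2).
move: Ht2 cS2 Ps2 Es2; set S2 := st_Ind A 2 => Ht2 cS2 Ps2 Es2.
rewrite EA2 /= in Es2.
have t1S2 : t 1%N \in S2.
  apply/negPn/negP => t1n.
  have cD : #|[set: 'I_3] :\ t 1%N| = 2%N.
    have := cardsD1 (t 1%N) [set: 'I_3]; rewrite cardsT card_ord inE /= add1n.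
    by move=> [] <-.
  have ES2 : S2 = [set: 'I_3] :\ t 1%N.
    apply/eqP; rewrite eqEcard cD cS2 leqnn andbT.
    apply/subsetP => z zS; rewrite !inE andbT.
    by apply: contraNneq t1n => <-.
  have := pterm_le_alpha hG A (perm_onT s2).
  rewrite cardsT card_ord EA3 (pterm_split _ _ (in_setT (t 1%N))) -ES2.
  rewrite (out_perm Ps2 t1n) nuv_smul x11 Es2 /= => h.
  suff : A2 < A2 by rewrite ltxx.
  by move: h f15 f16; lin_close hG.
have ES2 : S2 = [set t 1%N; t 2%N].
  apply/eqP; rewrite eq_sym eqEcard cards2 t12 cS2 leqnn andbT.
  by apply/subsetP => z; rewrite !inE => /orP[] /eqP ->.
rewrite ES2 in Ps2 Es2.
have g3 : ole (Some A2) (omax (oadd (x 1%N 1%N) (x 2%N 2%N)) (oadd (x 1%N 2%N) (x 2%N 1%N))).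
  rewrite -Es2 pterm2 // nuv_smul.
  case: (perm_on2_cases t12 Ps2) => [[-> ->]|[-> ->]].
    exact: ole_omaxl.
  exact: ole_omaxr.
have f3 : ole (oadd (x 1%N 1%N) (x 2%N 2%N)) (Some A2).
  have := pterm_le_alpha hG A (perm_on1 [set t 1%N; t 2%N]).
  by rewrite cards2 t12 EA2 pterm2 // !perm1 nuv_smul.
have f4 : ole (oadd (x 1%N 2%N) (x 2%N 1%N)) (Some A2).
  have := pterm_le_alpha hG A (tperm_on (t 1%N) (t 2%N)).
  by rewrite cards2 t12 EA2 pterm2 // tpermL tpermR nuv_smul.
have ht3 := ht 3%N isT; rewrite /= i2 i3 inE in ht3; case/andP: ht3 => t3n _.
rewrite -/S2 ES2 !inE negb_or in t3n; case/andP: t3n => t31 t32.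
have t13 : t 1%N != t 3%N by rewrite eq_sym.
have t23 : t 2%N != t 3%N by rewrite eq_sym.
have Es1' : nuv (st_pterm A [set t 1%N] s1) = nuv (st_alpha A 1).
  by rewrite pterm1 (perm_on1_fix Ps1) x11 EA1.
have set1n : forall a b : 'I_3, a != b -> [set a] != [set b].
  move=> a b ab; apply/eqP => /setP /(_ a); rewrite !inE eqxx.
  by rewrite (negbTE ab).
have f1 : olt (x 2%N 2%N) (Some A1).
  have := alpha_unique hG (halpha 1%N isT) (cards1 _) Ps1 Es1' (cards1 (t 2%N))
     (set1n _ _ t2n) (perm_on1 _).
  by rewrite pterm1 perm1 EA1.
have f2 : olt (x 3%N 3%N) (Some A1).
  have := alpha_unique hG (halpha 1%N isT) (cards1 _) Ps1 Es1' (cards1 (t 3%N))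
     (set1n _ _ t31) (perm_on1 _).
  by rewrite pterm1 perm1 EA1.
have Es2' : nuv (st_pterm A [set t 1%N; t 2%N] s2) = nuv (st_alpha A 2) by rewrite Es2 EA2.
have cS2' : #|[set t 1%N; t 2%N]| = 2%N by rewrite cards2 t12.
have n13 : [set t 1%N; t 3%N] != [set t 1%N; t 2%N].
  apply/eqP => /setP /(_ (t 3%N)); rewrite !inE eqxx orbT.
  by rewrite eq_sym (negbTE t13) eq_sym (negbTE t23).
have n23 : [set t 2%N; t 3%N] != [set t 1%N; t 2%N].
  apply/eqP => /setP /(_ (t 3%N)); rewrite !inE eqxx orbT.
  by rewrite eq_sym (negbTE t13) eq_sym (negbTE t23).
have c13 : #|[set t 1%N; t 3%N]| = 2%N by rewrite cards2 t13.
have c23 : #|[set t 2%N; t 3%N]| = 2%N by rewrite cards2 t23.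
have f5 : olt (oadd (x 1%N 1%N) (x 3%N 3%N)) (Some A2).
  have := alpha_unique hG (halpha 2%N isT) cS2' Ps2 Es2' c13 n13 (perm_on1 _).
  by rewrite pterm2 // !perm1 nuv_smul EA2.
have f6 : olt (oadd (x 1%N 3%N) (x 3%N 1%N)) (Some A2).
  have := alpha_unique hG (halpha 2%N isT) cS2' Ps2 Es2' c13 n13 (tperm_on _ _).
  by rewrite pterm2 // tpermL tpermR nuv_smul EA2.
have f7 : olt (oadd (x 2%N 2%N) (x 3%N 3%N)) (Some A2).
  have := alpha_unique hG (halpha 2%N isT) cS2' Ps2 Es2' c23 n23 (perm_on1 _).
  by rewrite pterm2 // !perm1 nuv_smul EA2.
have f8 : olt (oadd (x 2%N 3%N) (x 3%N 2%N)) (Some A2).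
  have := alpha_unique hG (halpha 2%N isT) cS2' Ps2 Es2' c23 n23 (tperm_on _ _).
  by rewrite pterm2 // tpermL tpermR nuv_smul EA2.
have T3 : forall s : 'S_3, ole (oadd (nuv (A (t 1%N) (s (t 1%N))))
          (oadd (nuv (A (t 2%N) (s (t 2%N)))) (nuv (A (t 3%N) (s (t 3%N)))))) (Some A3).
  move=> s; have := pterm_le_alpha hG A (perm_onT s).
  by rewrite cardsT card_ord EA3 (pterm3 _ _ t12 t13 t23) !nuv_smul.
have f9 := T3 1%g; rewrite !perm1 in f9.
have f10 := T3 (tperm (t 2%N) (t 3%N)).
rewrite tpermL tpermR (tpermD t2n t31) in f10.
have f11 := T3 (tperm (t 1%N) (t 3%N)).
rewrite tpermL tpermR (tpermD t12 t32) in f11.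
have f12 := T3 (tperm (t 1%N) (t 2%N)).
rewrite tpermL tpermR (tpermD t13 t23) in f12.
have f13 := T3 (tperm (t 1%N) (t 2%N) * tperm (t 1%N) (t 3%N))%g.
rewrite !permM ?tpermL ?tpermR ?(tpermD t12 t32) ?(tpermD t13 t23) ?tpermL ?tpermR in f13.
have f14 := T3 (tperm (t 1%N) (t 3%N) * tperm (t 1%N) (t 2%N))%g.
rewrite !permM ?tpermL ?tpermR ?(tpermD t12 t32) ?(tpermD t13 t23) ?tpermL ?tpermR in f14.
exists A1, A2, A3.
by do !split.
Qed.
End B3.

Section C.
Variable G : porderZmodType.
Hypothesis hG : ordered_abelian_group G.

Lemma skip_lift n (t : 'I_n) (r : 'I_n.-1) : st_skip t r = lift t r.
Proof. by apply: val_inj; rewrite /st_skip val_insubd; have := ltn_ord (lift t r); rewrite /= => ->. Qed.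

Lemma S2_cases (s : 'S_2) : s = 1%g \/ s = tperm ord0 ord_max.
Proof.
have o2 : forall z : 'I_2, z = ord0 \/ z = ord_max.
  by case=> [[|[|k]] Hk] //=; [left|right]; apply: val_inj.
case: (o2 (s ord0)) => E0.
  left; apply/permP => z; rewrite perm1.
  case: (o2 z) => -> //.
  case: (o2 (s ord_max)) => // E1.
  by have := perm_inj (etrans E1 (esym E0)).
right; apply/permP => z; case: (o2 z) => ->; first by rewrite tpermL.
rewrite tpermR; case: (o2 (s ord_max)) => // E1.
by have := perm_inj (etrans E1 (esym E0)).
Qed.

Lemma prod2 (F : 'I_2 -> stf G) : \big[@smul G/@sone G]_(i < 2) F i = smul (F ord0) (F ord_max).
Proof.
rewrite big_ord_recl big_ord_recl big_ord0.
have -> : lift ord0 ord0 = ord_max :> 'I_2 by apply: val_inj.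
suff sm1 : forall a : stf G, smul a (@sone G) = a by rewrite sm1.
by case=> [|x|x] //=; rewrite addr0.
Qed.

Lemma det2 (N : 'M[stf G]_2) :
  nuv (sdet N) = omax (oadd (nuv (N ord0 ord0)) (nuv (N ord_max ord_max)))
                      (oadd (nuv (N ord0 ord_max)) (nuv (N ord_max ord0))).
Proof.
apply: ole_anti.
  rewrite /sdet; apply: nbig_le => s _ _; rewrite prod2 nuv_smul.
  case: (S2_cases s) => ->.
    by rewrite !perm1; apply: ole_omaxl.
  by rewrite tpermL tpermR; apply: ole_omaxr.
apply: omax_le.
  have := nle_big hG (fun s : 'S_2 => \big[@smul G/@sone G]_(i < 2) N i (s i))
    (r := index_enum _) (P := xpredT) (mem_index_enum 1%g) isT.
  by rewrite prod2 nuv_smul !perm1.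
have := nle_big hG (fun s : 'S_2 => \big[@smul G/@sone G]_(i < 2) N i (s i))
  (r := index_enum _) (P := xpredT) (mem_index_enum (tperm ord0 ord_max)) isT.
by rewrite prod2 nuv_smul tpermL tpermR.
Qed.

Lemma two_others (t a b y z : 'I_3) : t != a -> t != b -> a != b ->
  y != t -> z != t -> y != z -> (y = a /\ z = b) \/ (y = b /\ z = a).
Proof.
move=> ta tb ab yt zt yz.
have Hy : y \in [set: 'I_3] by rewrite inE.
have Hz : z \in [set: 'I_3] by rewrite inE.
rewrite (setT3 ta tb ab) !inE (negbTE yt) /= in Hy.
rewrite (setT3 ta tb ab) !inE (negbTE zt) /= in Hz.
case/orP: Hy => /eqP Hy; case/orP: Hz => /eqP Hz; subst.
- by rewrite eqxx in yz.
- by left.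
- by right.
- by rewrite eqxx in yz.
Qed.

Lemma minor_off (M : 'M[stf G]_3) (j t m : 'I_3) : j != t -> m != j -> m != t ->
  ole (nuv (sdet (st_minor M t j)))
      (omax (oadd (nuv (M j t)) (nuv (M m m))) (oadd (nuv (M j m)) (nuv (M m t)))).
Proof.
move=> jt mj mt; rewrite det2 /st_minor !mxE !skip_lift.
have l01 : forall h : 'I_3, lift h ord0 != lift h (ord_max : 'I_2).
  by move=> h; apply/eqP => /lift_inj.
have tj : t != j by rewrite eq_sym.
have tm : t != m by rewrite eq_sym.
have jm : j != m by rewrite eq_sym.
have r0 : lift t ord0 != t by rewrite eq_sym neq_lift.
have r1 : lift t (ord_max : 'I_2) != t by rewrite eq_sym neq_lift.
have c0 : lift j ord0 != j by rewrite eq_sym neq_lift.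
have c1 : lift j (ord_max : 'I_2) != j by rewrite eq_sym neq_lift.
have R := two_others tj tm jm r0 r1 (l01 t).
have C := two_others jt jm tm c0 c1 (l01 j).
case: R => [[-> ->]|[-> ->]]; case: C => [[-> ->]|[-> ->]];
  apply: omax_le; first [ apply: ole_omaxl | apply: (ole_omaxr hG)
     | rewrite oaddC; first [ apply: ole_omaxl | apply: (ole_omaxr hG)]].
Qed.

Lemma minor_diag (M : 'M[stf G]_3) (t a b : 'I_3) : t != a -> t != b -> a != b ->
  ole (oadd (nuv (M a a)) (nuv (M b b))) (nuv (sdet (st_minor M t t))) /\
  ole (oadd (nuv (M a b)) (nuv (M b a))) (nuv (sdet (st_minor M t t))).
Proof.
move=> ta tb ab; rewrite det2 /st_minor !mxE !skip_lift.
have l01 : forall h : 'I_3, lift h ord0 != lift h (ord_max : 'I_2).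
  by move=> h; apply/eqP => /lift_inj.
have r0 : lift t ord0 != t by rewrite eq_sym neq_lift.
have r1 : lift t (ord_max : 'I_2) != t by rewrite eq_sym neq_lift.
case: (two_others ta tb ab r0 r1 (l01 t)) => [[-> ->]|[-> ->]]; split;
  first [ apply: ole_omaxl | apply: (ole_omaxr hG)
     | rewrite oaddC; first [ apply: ole_omaxl | apply: (ole_omaxr hG)]].
Qed.
End C.

Ltac dest_opt := repeat match goal with |- context [?v] => is_var v;
  lazymatch type of v with option _ => destruct v end end.

Section Core.
Variable G : porderZmodType.
Hypothesis hG : ordered_abelian_group G.

Lemma core_T12 (x11 x12 x13 x21 x22 x23 x31 x32 x33 : option G) (A1 A2 A3 : G)
  (h11 : x11 = Some A1)
  (f1 : olt x22 (Some A1)) (f2 : olt x33 (Some A1))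
  (f3 : ole (oadd x11 x22) (Some A2)) (f4 : ole (oadd x12 x21) (Some A2))
  (f5 : olt (oadd x11 x33) (Some A2)) (f6 : olt (oadd x13 x31) (Some A2))
  (f7 : olt (oadd x22 x33) (Some A2)) (f8 : olt (oadd x23 x32) (Some A2))
  (f9 : ole (oadd x11 (oadd x22 x33)) (Some A3)) (f10 : ole (oadd x11 (oadd x23 x32)) (Some A3))
  (f11 : ole (oadd x13 (oadd x22 x31)) (Some A3)) (f12 : ole (oadd x12 (oadd x21 x33)) (Some A3))
  (f13 : ole (oadd x12 (oadd x23 x31)) (Some A3)) (f14 : ole (oadd x13 (oadd x21 x32)) (Some A3))
  (f15 : A2 < A1 *+ 2) (f16 : A3 + A1 < A2 *+ 2) :
  olt (oadd (omax (oadd x12 (omax x33 (Some (A2 - A1)))) (oadd x13 x32)) (omax (oadd x21 (omax x33 (Some A1))) (oadd x23 x31))) (Some (A1 *+ 2 + A2)).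
Proof.
subst x11.
rewrite !(oadd_omaxl hG, oadd_omaxr hG).
repeat apply: omax_lt.
all: dest_opt; simpl in *; try done.
all: first [ (move: (f2) (f2) (f4); lin_close hG) | (move: (f2) (f4); lin_close hG) | (move: (f2) (f13) (f15) (f16); lin_close hG) | (move: (f2) (f4) (f15); lin_close hG) | (move: (f4) (f15); lin_close hG) | (move: (f13) (f15) (f15) (f16); lin_close hG) | (move: (f2) (f14) (f15) (f16); lin_close hG) | (move: (f14) (f15) (f16); lin_close hG) | (move: (f6) (f8) (f15); lin_close hG) ].
Qed.

Lemma core_T13 (x11 x12 x13 x21 x22 x23 x31 x32 x33 : option G) (A1 A2 A3 : G)
  (h11 : x11 = Some A1)
  (f1 : olt x22 (Some A1)) (f2 : olt x33 (Some A1))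
  (f3 : ole (oadd x11 x22) (Some A2)) (f4 : ole (oadd x12 x21) (Some A2))
  (f5 : olt (oadd x11 x33) (Some A2)) (f6 : olt (oadd x13 x31) (Some A2))
  (f7 : olt (oadd x22 x33) (Some A2)) (f8 : olt (oadd x23 x32) (Some A2))
  (f9 : ole (oadd x11 (oadd x22 x33)) (Some A3)) (f10 : ole (oadd x11 (oadd x23 x32)) (Some A3))
  (f11 : ole (oadd x13 (oadd x22 x31)) (Some A3)) (f12 : ole (oadd x12 (oadd x21 x33)) (Some A3))
  (f13 : ole (oadd x12 (oadd x23 x31)) (Some A3)) (f14 : ole (oadd x13 (oadd x21 x32)) (Some A3))
  (f15 : A2 < A1 *+ 2) (f16 : A3 + A1 < A2 *+ 2) :
  olt (oadd (omax (oadd x13 (omax x22 (Some (A3 - A2)))) (oadd x12 x23)) (omax (oadd x31 (omax x22 (Some A1))) (oadd x32 x21))) (Some (A1 *+ 2 + A2)).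
Proof.
subst x11.
rewrite !(oadd_omaxl hG, oadd_omaxr hG).
repeat apply: omax_lt.
all: dest_opt; simpl in *; try done.
all: first [ (move: (f1) (f1) (f6); lin_close hG) | (move: (f1) (f6); lin_close hG) | (move: (f1) (f14) (f15) (f16); lin_close hG) | (move: (f1) (f6) (f15) (f16); lin_close hG) | (move: (f6) (f15) (f16); lin_close hG) | (move: (f14) (f15) (f15) (f16) (f16); lin_close hG) | (move: (f1) (f13) (f15) (f16); lin_close hG) | (move: (f13) (f15) (f16); lin_close hG) | (move: (f4) (f8) (f15); lin_close hG) ].
Qed.

Lemma core_T23 (x11 x12 x13 x21 x22 x23 x31 x32 x33 : option G) (A1 A2 A3 : G)
  (h11 : x11 = Some A1)
  (f1 : olt x22 (Some A1)) (f2 : olt x33 (Some A1))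
  (f3 : ole (oadd x11 x22) (Some A2)) (f4 : ole (oadd x12 x21) (Some A2))
  (f5 : olt (oadd x11 x33) (Some A2)) (f6 : olt (oadd x13 x31) (Some A2))
  (f7 : olt (oadd x22 x33) (Some A2)) (f8 : olt (oadd x23 x32) (Some A2))
  (f9 : ole (oadd x11 (oadd x22 x33)) (Some A3)) (f10 : ole (oadd x11 (oadd x23 x32)) (Some A3))
  (f11 : ole (oadd x13 (oadd x22 x31)) (Some A3)) (f12 : ole (oadd x12 (oadd x21 x33)) (Some A3))
  (f13 : ole (oadd x12 (oadd x23 x31)) (Some A3)) (f14 : ole (oadd x13 (oadd x21 x32)) (Some A3))
  (f15 : A2 < A1 *+ 2) (f16 : A3 + A1 < A2 *+ 2) :
  olt (oadd (omax (oadd x23 (omax x11 (Some (A3 - A2)))) (oadd x21 x13)) (omax (oadd x32 (omax x11 (Some (A2 - A1)))) (oadd x31 x12))) (Some (A2 + A2)).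
Proof.
subst x11.
rewrite !(oadd_omaxl hG, oadd_omaxr hG).
repeat apply: omax_lt.
all: dest_opt; simpl in *; try done.
all: first [ (move: (f10) (f16); lin_close hG) | (move: (f8); lin_close hG) | (move: (f13) (f16); lin_close hG) | (move: (f8) (f16); lin_close hG) | (move: (f8) (f15) (f16); lin_close hG) | (move: (f13) (f15) (f16) (f16); lin_close hG) | (move: (f14) (f16); lin_close hG) | (move: (f14) (f15) (f16); lin_close hG) | (move: (f4) (f6); lin_close hG) ].
Qed.

Lemma core_C123 (x11 x12 x13 x21 x22 x23 x31 x32 x33 : option G) (A1 A2 A3 : G)
  (h11 : x11 = Some A1)
  (f1 : olt x22 (Some A1)) (f2 : olt x33 (Some A1))
  (f3 : ole (oadd x11 x22) (Some A2)) (f4 : ole (oadd x12 x21) (Some A2))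
  (f5 : olt (oadd x11 x33) (Some A2)) (f6 : olt (oadd x13 x31) (Some A2))
  (f7 : olt (oadd x22 x33) (Some A2)) (f8 : olt (oadd x23 x32) (Some A2))
  (f9 : ole (oadd x11 (oadd x22 x33)) (Some A3)) (f10 : ole (oadd x11 (oadd x23 x32)) (Some A3))
  (f11 : ole (oadd x13 (oadd x22 x31)) (Some A3)) (f12 : ole (oadd x12 (oadd x21 x33)) (Some A3))
  (f13 : ole (oadd x12 (oadd x23 x31)) (Some A3)) (f14 : ole (oadd x13 (oadd x21 x32)) (Some A3))
  (f15 : A2 < A1 *+ 2) (f16 : A3 + A1 < A2 *+ 2) :
  olt (oadd (omax (oadd x12 (omax x33 (Some (A2 - A1)))) (oadd x13 x32)) (oadd (omax (oadd x23 (omax x11 (Some (A3 - A2)))) (oadd x21 x13)) (omax (oadd x31 (omax x22 (Some A1))) (oadd x32 x21)))) (Some (A1 *+ 2 + A2 + A2)).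
Proof.
subst x11.
rewrite !(oadd_omaxl hG, oadd_omaxr hG).
repeat apply: omax_lt.
all: dest_opt; simpl in *; try done.
all: first [ (move: (f1) (f2) (f13) (f16); lin_close hG) | (move: (f2) (f13) (f16); lin_close hG) | (move: (f2) (f4) (f8); lin_close hG) | (move: (f1) (f2) (f13) (f15) (f16) (f16); lin_close hG) | (move: (f2) (f13) (f15) (f16) (f16); lin_close hG) | (move: (f2) (f4) (f8) (f15) (f16); lin_close hG) | (move: (f1) (f2) (f4) (f6); lin_close hG) | (move: (f2) (f4) (f6); lin_close hG) | (move: (f2) (f4) (f14) (f15) (f16); lin_close hG) | (move: (f1) (f13) (f15) (f16); lin_close hG) | (move: (f13) (f15) (f16); lin_close hG) | (move: (f4) (f8) (f15); lin_close hG) | (move: (f1) (f13) (f15) (f15) (f16) (f16); lin_close hG) | (move: (f13) (f15) (f15) (f16) (f16); lin_close hG) | (move: (f4) (f8) (f15) (f15) (f16); lin_close hG) | (move: (f1) (f4) (f6) (f15); lin_close hG) | (move: (f4) (f6) (f15); lin_close hG) | (move: (f4) (f14) (f15) (f15) (f16); lin_close hG) | (move: (f1) (f6) (f8); lin_close hG) | (move: (f6) (f8); lin_close hG) | (move: (f8) (f14) (f15) (f16); lin_close hG) | (move: (f1) (f6) (f8) (f15) (f16); lin_close hG) | (move: (f6) (f8) (f15) (f16); lin_close hG) | (move: (f8) (f14) (f15) (f15) (f16) (f16); lin_close hG) | (move: (f1) (f6) (f14) (f15) (f16); lin_close hG) | (move: (f6) (f14) (f15) (f16); lin_close hG) | (move: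 (f14) (f14) (f15) (f15) (f16) (f16); lin_close hG) ].
Qed.

Lemma core_C132 (x11 x12 x13 x21 x22 x23 x31 x32 x33 : option G) (A1 A2 A3 : G)
  (h11 : x11 = Some A1)
  (f1 : olt x22 (Some A1)) (f2 : olt x33 (Some A1))
  (f3 : ole (oadd x11 x22) (Some A2)) (f4 : ole (oadd x12 x21) (Some A2))
  (f5 : olt (oadd x11 x33) (Some A2)) (f6 : olt (oadd x13 x31) (Some A2))
  (f7 : olt (oadd x22 x33) (Some A2)) (f8 : olt (oadd x23 x32) (Some A2))
  (f9 : ole (oadd x11 (oadd x22 x33)) (Some A3)) (f10 : ole (oadd x11 (oadd x23 x32)) (Some A3))
  (f11 : ole (oadd x13 (oadd x22 x31)) (Some A3)) (f12 : ole (oadd x12 (oadd x21 x33)) (Some A3))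
  (f13 : ole (oadd x12 (oadd x23 x31)) (Some A3)) (f14 : ole (oadd x13 (oadd x21 x32)) (Some A3))
  (f15 : A2 < A1 *+ 2) (f16 : A3 + A1 < A2 *+ 2) :
  olt (oadd (omax (oadd x13 (omax x22 (Some (A3 - A2)))) (oadd x12 x23)) (oadd (omax (oadd x32 (omax x11 (Some (A2 - A1)))) (oadd x31 x12)) (omax (oadd x21 (omax x33 (Some A1))) (oadd x23 x31)))) (Some (A1 *+ 2 + A2 + A2)).
Proof.
subst x11.
rewrite !(oadd_omaxl hG, oadd_omaxr hG).
repeat apply: omax_lt.
all: dest_opt; simpl in *; try done.
all: first [ (move: (f1) (f2) (f14) (f16); lin_close hG) | (move: (f1) (f14) (f16); lin_close hG) | (move: (f1) (f6) (f8); lin_close hG) | (move: (f1) (f2) (f14) (f15) (f16); lin_close hG) | (move: (f1) (f14) (f15) (f16); lin_close hG) | (move: (f1) (f6) (f8) (f15); lin_close hG) | (move: (f1) (f2) (f4) (f6); lin_close hG) | (move: (f1) (f4) (f6); lin_close hG) | (move: (f1) (f6) (f13) (f15) (f16); lin_close hG) | (move: (f2) (f14) (f15) (f16) (f16); lin_close hG) | (move: (f14) (f15) (f16) (f16); lin_close hG) | (move: (f6) (f8) (f15) (f16); lin_close hG) | (move: (f2) (f14) (f15) (f15) (f16) (f16); lin_close hG) | (move: (f14) (f15) (f15) (f16) (f16); lin_close hG) | (move: (f6) (f8) (f15) (f15) (f16); lin_close hG) | (move: (f2) (f4) (f6) (f15) (f16); lin_close hG) | (move: (f4) (f6) (f15)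 (f16); lin_close hG) | (move: (f6) (f13) (f15) (f15) (f16) (f16); lin_close hG) | (move: (f2) (f4) (f8); lin_close hG) | (move: (f4) (f8); lin_close hG) | (move: (f8) (f13) (f15) (f16); lin_close hG) | (move: (f2) (f4) (f8) (f15); lin_close hG) | (move: (f4) (f8) (f15); lin_close hG) | (move: (f8) (f13) (f15) (f15) (f16); lin_close hG) | (move: (f2) (f4) (f13) (f15) (f16); lin_close hG) | (move: (f4) (f13) (f15) (f16); lin_close hG) | (move: (f13) (f13) (f15) (f15) (f16) (f16); lin_close hG) ].
Qed.

End Core.

Section R.
Variable G : porderZmodType.
Hypothesis hG : ordered_abelian_group G.

Lemma ghost_row (r : seq nat) (F : nat -> stf G) l : uniq r -> l \in r ->
  tangible (F l) ->
  ghost0 (\big[@sadd G/@SZero G]_(k <- r) F k) ->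
  exists2 k, k \in r & (k != l) && ~~ olt (nuv (F k)) (nuv (F l)).
Proof.
move=> ur lr Tl /negP Hg.
case: (boolP (has (fun k => (k != l) && ~~ olt (nuv (F k)) (nuv (F l))) r)).
  by move=> /hasP [k kr Pk]; exists k.
move=> Hn; exfalso; apply: Hg.
have H : forall j, j \in r -> xpredT j -> j != l -> olt (nuv (F j)) (nuv (F l)).
  by move=> j jr _ jl; move/hasPn: Hn => /(_ j jr); rewrite jl /= negbK.
by have [T _] := nbig_tangible hG (P := xpredT) ur lr isT Tl H.
Qed.
End R.

Section F3.
Variable G : porderZmodType.
Hypothesis hG : ordered_abelian_group G.

Lemma row_fact (al ak d : G) (Nll Nlk : option G) : ole (Some d) Nll ->
  ~~ olt (oadd (Some ak) Nlk) (oadd (Some al) Nll) ->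
  exists nll nlk, [/\ Nll = Some nll, Nlk = Some nlk, d <= nll & al + nll <= ak + nlk].
Proof.
case: Nll => [nll|] // Hd; case: Nlk => [nlk|] //= H.
exists nll, nlk; split => //; move: H; rewrite (og_ltNge hG) negbK //.
Qed.

Lemma tang_term (c : G) (X : stf G) : nuv X <> None -> tangible (smul (STan c) (hat X)).
Proof. by case: X. Qed.

Lemma final3 (A : 'M[stf G]_3)
  (halpha : forall k, (k <= 3)%N -> tangible (st_alpha A k))
  (lam : nat -> G)
  (i : nat -> nat) (hi0 : i 0%N = 0%N)
  (hiess : forall k, (k <= 3)%N -> (i k <= 3)%N /\ st_essential A (i k))
  (hinc : forall k, (1 <= k <= 3)%N -> (i k.-1 < i k)%N)
  (hcorner : forall k, (1 <= k <= 3)%N ->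
     nu_eq (st_monom A (i k.-1) (STan (lam k))) (st_monom A (i k) (STan (lam k))))
  (t : nat -> 'I_3)
  (ht : forall k, (1 <= k <= 3)%N -> t k \in st_Ind A (i k) :\: st_Ind A (i k.-1)) :
  let v : nat -> 'cV[stf G]_3 := fun k =>
    (\col_r hat (sadj (st_addscal A (STan (lam k))) r (t k)))%R in
  st_independent 3 v.
Proof.
move=> v.
have := partB3 hG halpha hi0 hiess hinc hcorner ht; cbv beta.
move=> [A1 [A2 [A3 [[t12 t13 t23] [[L1 L2 L3] [[x11 f1 f2] [[f3 f4 f5]
   [[f6 f7 f8] [[f9 f10 f11] [[f12 f13 f14] [f15 f16 g3]]]]]]]]]]].
move=> [a Ha].
pose B k := st_addscal A (STan (lam k)).
have Nd : forall l k, v k (t l) 0 = hat (sdet (st_minor (B k) (t k) (t l))).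
  by move=> l k; rewrite /v /sadj !mxE.
have Bd : forall k z, nuv (B k z z) = omax (nuv (A z z)) (Some (lam k)).
  by move=> k z; rewrite /B /st_addscal mxE eqxx nuv_sadd.
have Bo : forall k z w, z != w -> B k z w = A z w.
  by move=> k z w zw; rewrite /B /st_addscal mxE (negbTE zw).
have Voff : forall l k m : nat, t l != t k -> t m != t l -> t m != t k ->
  ole (nuv (sdet (st_minor (B k) (t k) (t l))))
    (omax (oadd (nuv (A (t l) (t k))) (omax (nuv (A (t m) (t m))) (Some (lam k))))
          (oadd (nuv (A (t l) (t m))) (nuv (A (t m) (t k))))).
  move=> l k m lk ml mk; have := minor_off hG (B k) lk ml mk.
  rewrite Bd !Bo //; by rewrite eq_sym.
have t21 : t 2%N != t 1%N by rewrite eq_sym.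
have t31 : t 3%N != t 1%N by rewrite eq_sym.
have t32 : t 3%N != t 2%N by rewrite eq_sym.
have D1 : ole (Some (A1 + A1)) (nuv (sdet (st_minor (B 1%N) (t 1%N) (t 1%N)))).
  apply: ole_trans (minor_diag hG (B 1%N) t12 t13 t23).1.
  rewrite !Bd L1; change (ole (oadd (Some A1) (Some A1)) (oadd (omax (nuv (A (t 2%N) (t 2%N))) (Some A1))
      (omax (nuv (A (t 3%N) (t 3%N))) (Some A1)))).
  apply: (oadd_le hG); exact: ole_omaxr.
have D2 : ole (Some (A1 + (A2 - A1))) (nuv (sdet (st_minor (B 2%N) (t 2%N) (t 2%N)))).
  apply: ole_trans (minor_diag hG (B 2%N) t21 t23 t13).1.
  rewrite !Bd L2 x11; change (ole (oadd (Some A1) (Some (A2 - A1))) (oadd (omax (Some A1) (Some (A2 - A1)))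
      (omax (nuv (A (t 3%N) (t 3%N))) (Some (A2 - A1))))).
  apply: (oadd_le hG); first exact: ole_omaxl.
  exact: ole_omaxr.
have D3 : ole (Some A2) (nuv (sdet (st_minor (B 3%N) (t 3%N) (t 3%N)))).
  have [h1 h2] := minor_diag hG (B 3%N) t31 t32 t12.
  apply: ole_trans g3 _; apply: omax_le.
    apply: ole_trans h1; rewrite !Bd; apply: (oadd_le hG); exact: ole_omaxl.
  by apply: ole_trans h2; rewrite !Bo // ole_refl.
have N1 : nuv (sdet (st_minor (B 1%N) (t 1%N) (t 1%N))) <> None.
  by move=> E; move: D1; rewrite E.
have T1 : tangible (smul (STan (a 1%N)) (v 1%N (t 1%N) 0)).
  by rewrite Nd; apply: tang_term.
have [k1 k1r /andP[k1l Hk1]] := ghost_row hG (r := index_iota 1 4)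
  (F := fun k => smul (STan (a k)) (v k (t 1%N) 0)) (l := 1%N) isT isT
  T1
  (Ha (t 1%N)).
rewrite !nuv_smul !Nd !nuv_hat in Hk1.
have [n1 [m1 [E11 E1k d1 r1]]] := row_fact D1 Hk1.
have N2 : nuv (sdet (st_minor (B 2%N) (t 2%N) (t 2%N))) <> None.
  by move=> E; move: D2; rewrite E.
have T2 : tangible (smul (STan (a 2%N)) (v 2%N (t 2%N) 0)).
  by rewrite Nd; apply: tang_term.
have [k2 k2r /andP[k2l Hk2]] := ghost_row hG (r := index_iota 1 4)
  (F := fun k => smul (STan (a k)) (v k (t 2%N) 0)) (l := 2%N) isT isT
  T2
  (Ha (t 2%N)).
rewrite !nuv_smul !Nd !nuv_hat in Hk2.
have [n2 [m2 [E22 E2k d2 r2]]] := row_fact D2 Hk2.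
have N3 : nuv (sdet (st_minor (B 3%N) (t 3%N) (t 3%N))) <> None.
  by move=> E; move: D3; rewrite E.
have T3 : tangible (smul (STan (a 3%N)) (v 3%N (t 3%N) 0)).
  by rewrite Nd; apply: tang_term.
have [k3 k3r /andP[k3l Hk3]] := ghost_row hG (r := index_iota 1 4)
  (F := fun k => smul (STan (a k)) (v k (t 3%N) 0)) (l := 3%N) isT isT
  T3
  (Ha (t 3%N)).
rewrite !nuv_smul !Nd !nuv_hat in Hk3.
have [n3 [m3 [E33 E3k d3 r3]]] := row_fact D3 Hk3.

move: k1r; rewrite /index_iota /= !inE => /or3P[/eqP ?|/eqP ?|/eqP ?]; subst k1; first by rewrite eqxx in k1l.
-
  move: k2r; rewrite /index_iota /= !inE => /or3P[/eqP ?|/eqP ?|/eqP ?]; subst k2; [ | by rewrite eqxx in k2l | ].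
  +
    move: k3r; rewrite /index_iota /= !inE => /or3P[/eqP ?|/eqP ?|/eqP ?]; subst k3; [ | | by rewrite eqxx in k3l].
    *
      have V12 := Voff 1%N 2%N 3%N t12 t31 t32.
      rewrite E1k ?L1 ?L2 ?L3 in V12.
      have V21 := Voff 2%N 1%N 3%N t21 t32 t31.
      rewrite E2k ?L1 ?L2 ?L3 in V21.
      have c := core_T12 hG x11 f1 f2 f3 f4 f5 f6 f7 f8 f9 f10 f11 f12 f13 f14 f15 f16.
      have := ole_lt_trans (oadd_le hG V12 V21) c; rewrite /= => h.
      suff : (0 : G) < 0 by rewrite ltxx.
      by move: h r1 d1 r2 d2; lin_close hG.
    *
      have V12 := Voff 1%N 2%N 3%N t12 t31 t32.
      rewrite E1k ?L1 ?L2 ?L3 in V12.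
      have V21 := Voff 2%N 1%N 3%N t21 t32 t31.
      rewrite E2k ?L1 ?L2 ?L3 in V21.
      have c := core_T12 hG x11 f1 f2 f3 f4 f5 f6 f7 f8 f9 f10 f11 f12 f13 f14 f15 f16.
      have := ole_lt_trans (oadd_le hG V12 V21) c; rewrite /= => h.
      suff : (0 : G) < 0 by rewrite ltxx.
      by move: h r1 d1 r2 d2; lin_close hG.
  +
    move: k3r; rewrite /index_iota /= !inE => /or3P[/eqP ?|/eqP ?|/eqP ?]; subst k3; [ | | by rewrite eqxx in k3l].
    *
      have V12 := Voff 1%N 2%N 3%N t12 t31 t32.
      rewrite E1k ?L1 ?L2 ?L3 in V12.
      have V23 := Voff 2%N 3%N 1%N t23 t12 t13.
      rewrite E2k ?L1 ?L2 ?L3 in V23.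
      have V31 := Voff 3%N 1%N 2%N t31 t23 t21.
      rewrite E3k ?L1 ?L2 ?L3 in V31.
      have c := core_C123 hG x11 f1 f2 f3 f4 f5 f6 f7 f8 f9 f10 f11 f12 f13 f14 f15 f16.
      have := ole_lt_trans (oadd_le hG V12 (oadd_le hG V23 V31)) c; rewrite /= => h.
      suff : (0 : G) < 0 by rewrite ltxx.
      by move: h r1 d1 r2 d2 r3 d3; lin_close hG.
    *
      have V23 := Voff 2%N 3%N 1%N t23 t12 t13.
      rewrite E2k ?L1 ?L2 ?L3 in V23.
      have V32 := Voff 3%N 2%N 1%N t32 t13 t12.
      rewrite E3k ?L1 ?L2 ?L3 in V32.
      have c := core_T23 hG x11 f1 f2 f3 f4 f5 f6 f7 f8 f9 f10 f11 f12 f13 f14 f15 f16.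
      have := ole_lt_trans (oadd_le hG V23 V32) c; rewrite /= => h.
      suff : (0 : G) < 0 by rewrite ltxx.
      by move: h r2 d2 r3 d3; lin_close hG.
-
  move: k2r; rewrite /index_iota /= !inE => /or3P[/eqP ?|/eqP ?|/eqP ?]; subst k2; [ | by rewrite eqxx in k2l | ].
  +
    move: k3r; rewrite /index_iota /= !inE => /or3P[/eqP ?|/eqP ?|/eqP ?]; subst k3; [ | | by rewrite eqxx in k3l].
    *
      have V13 := Voff 1%N 3%N 2%N t13 t21 t23.
      rewrite E1k ?L1 ?L2 ?L3 in V13.
      have V31 := Voff 3%N 1%N 2%N t31 t23 t21.
      rewrite E3k ?L1 ?L2 ?L3 in V31.
      have c := core_T13 hG x11 f1 f2 f3 f4 f5 f6 f7 f8 f9 f10 f11 f12 f13 f14 f15 f16.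
      have := ole_lt_trans (oadd_le hG V13 V31) c; rewrite /= => h.
      suff : (0 : G) < 0 by rewrite ltxx.
      by move: h r1 d1 r3 d3; lin_close hG.
    *
      have V13 := Voff 1%N 3%N 2%N t13 t21 t23.
      rewrite E1k ?L1 ?L2 ?L3 in V13.
      have V32 := Voff 3%N 2%N 1%N t32 t13 t12.
      rewrite E3k ?L1 ?L2 ?L3 in V32.
      have V21 := Voff 2%N 1%N 3%N t21 t32 t31.
      rewrite E2k ?L1 ?L2 ?L3 in V21.
      have c := core_C132 hG x11 f1 f2 f3 f4 f5 f6 f7 f8 f9 f10 f11 f12 f13 f14 f15 f16.
      have := ole_lt_trans (oadd_le hG V13 (oadd_le hG V32 V21)) c; rewrite /= => h.
      suff : (0 : G) < 0 by rewrite ltxx.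
      by move: h r1 d1 r3 d3 r2 d2; lin_close hG.
  +
    move: k3r; rewrite /index_iota /= !inE => /or3P[/eqP ?|/eqP ?|/eqP ?]; subst k3; [ | | by rewrite eqxx in k3l].
    *
      have V13 := Voff 1%N 3%N 2%N t13 t21 t23.
      rewrite E1k ?L1 ?L2 ?L3 in V13.
      have V31 := Voff 3%N 1%N 2%N t31 t23 t21.
      rewrite E3k ?L1 ?L2 ?L3 in V31.
      have c := core_T13 hG x11 f1 f2 f3 f4 f5 f6 f7 f8 f9 f10 f11 f12 f13 f14 f15 f16.
      have := ole_lt_trans (oadd_le hG V13 V31) c; rewrite /= => h.
      suff : (0 : G) < 0 by rewrite ltxx.
      by move: h r1 d1 r3 d3; lin_close hG.
    *
      have V23 := Voff 2%N 3%N 1%N t23 t12 t13.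
      rewrite E2k ?L1 ?L2 ?L3 in V23.
      have V32 := Voff 3%N 2%N 1%N t32 t13 t12.
      rewrite E3k ?L1 ?L2 ?L3 in V32.
      have c := core_T23 hG x11 f1 f2 f3 f4 f5 f6 f7 f8 f9 f10 f11 f12 f13 f14 f15 f16.
      have := ole_lt_trans (oadd_le hG V23 V32) c; rewrite /= => h.
      suff : (0 : G) < 0 by rewrite ltxx.
      by move: h r2 d2 r3 d3; lin_close hG.
Qed.
End F3.

Section F2.
Variable G : porderZmodType.
Hypothesis hG : ordered_abelian_group G.

Lemma alpha0_gen n (A : 'M[stf G]_n) : nuv (st_alpha A 0) = Some 0.
Proof.
apply: ole_anti.
  rewrite /st_alpha; apply: nbig_le => S _ /eqP /cards0_eq ->.
  rewrite /st_pdet; apply: nbig_le => s _ _; rewrite /st_pterm big_set0 /=; exact: le_refl.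
have := pterm_le_alpha hG A (perm_on1 set0); rewrite cards0 /st_pterm big_set0.
by [].
Qed.

Lemma det1 (N : 'M[stf G]_1) : nuv (sdet N) = nuv (N ord0 ord0).
Proof.
have E : forall s : 'S_1, \big[@smul G/@sone G]_(i < 1) N i (s i) = N ord0 ord0.
  move=> s; rewrite big_ord_recl big_ord0.
  have -> : s ord0 = ord0 by apply: val_inj; case: (s ord0) => [[|k] Hk].
  by case: (N ord0 ord0) => [|x|x] //=; rewrite addr0.
apply: ole_anti.
  by rewrite /sdet; apply: nbig_le => s _ _; rewrite E ole_refl.
have := nle_big hG (fun s : 'S_1 => \big[@smul G/@sone G]_(i < 1) N i (s i))
    (r := index_enum _) (P := xpredT) (mem_index_enum 1%g) isT.
by rewrite E.
Qed.

Lemma other2 (a b : 'I_2) (y : 'I_2) : a != b -> y != a -> y = b.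
Proof.
move=> ab ya; move: a b y ab ya.
by do 3 (case=> [[|[|k]] ?] //=); move=> *; apply: val_inj.
Qed.

Lemma final2 (A : 'M[stf G]_2)
  (halpha : forall k, (k <= 2)%N -> tangible (st_alpha A k))
  (lam : nat -> G)
  (i : nat -> nat) (hi0 : i 0%N = 0%N)
  (hiess : forall k, (k <= 2)%N -> (i k <= 2)%N /\ st_essential A (i k))
  (hinc : forall k, (1 <= k <= 2)%N -> (i k.-1 < i k)%N)
  (hcorner : forall k, (1 <= k <= 2)%N ->
     nu_eq (st_monom A (i k.-1) (STan (lam k))) (st_monom A (i k) (STan (lam k))))
  (t : nat -> 'I_2)
  (ht : forall k, (1 <= k <= 2)%N -> t k \in st_Ind A (i k) :\: st_Ind A (i k.-1)) :
  let v : nat -> 'cV[stf G]_2 := fun k =>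
    (\col_r hat (sadj (st_addscal A (STan (lam k))) r (t k)))%R in
  st_independent 2 v.
Proof.
move=> v.
have [i1 i2] : i 1%N = 1%N /\ i 2%N = 2%N.
  have h1 := hinc 1%N isT; have h2 := hinc 2%N isT.
  have [h4 _] := hiess 2%N isT; simpl in h1, h2; split; lia.
have [A1 EA1] : exists a, st_alpha A 1 = STan a.
  by move: (halpha 1%N isT); case: (st_alpha A 1) => // a _; exists a.
have [A2 EA2] : exists a, st_alpha A 2 = STan a.
  by move: (halpha 2%N isT); case: (st_alpha A 2) => // a _; exists a.
have EA0 := alpha0_gen A.
have hc1 := hcorner 1%N isT; have hc2 := hcorner 2%N isT.
rewrite /= hi0 i1 i2 /nu_eq /st_monom !nuv_smul EA1 EA2 EA0 /= in hc1 hc2.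
move/eqP: hc1 => [] /eqP; rewrite eq_le => /andP[c11 c12].
move/eqP: hc2 => [] /eqP; rewrite eq_le => /andP[c21 c22].
have L1 : lam 1%N = A1 by apply: eq_of_les; [move: c11 | move: c12]; lin_close hG.
have L2 : lam 2%N = A2 - A1 by apply: eq_of_les; [move: c21 | move: c22]; lin_close hG.
have [y1 Hy1] := (hiess 1%N isT).2; rewrite i1 in Hy1.
have e10 := Hy1 0%N isT isT; have e12 := Hy1 2%N isT isT.
rewrite /nu_lt /st_monom !nuv_smul EA1 EA2 EA0 /= in e10 e12.
have f15 : A2 < A1 *+ 2 by move: e10 e12; lin_close hG.
have ht1 := ht 1%N isT; rewrite /= i1 hi0 inE in ht1; case/andP: ht1 => _ Ht1.
have [cS1 [s1 [Ps1 Es1]]] := is_Ind_P (Ind_spec Ht1).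
move: Ht1 cS1 Ps1 Es1; set S1 := st_Ind A 1 => Ht1 cS1 Ps1 Es1.
have /cards1P [a0 Ea] : #|S1| == 1%N by rewrite cS1.
move: Ht1; rewrite Ea inE => /eqP Eta; subst a0.
rewrite Ea in Ps1; move: Es1; rewrite Ea pterm1 (perm_on1_fix Ps1) EA1 => x11.
have ht2 := ht 2%N isT; rewrite /= i1 i2 inE in ht2; case/andP: ht2 => t2n _.
rewrite -/S1 Ea inE in t2n.
have t12 : t 1%N != t 2%N by rewrite eq_sym.
have cT : #|[set t 1%N; t 2%N]| = 2%N by rewrite cards2 t12.
have f4 : ole (oadd (nuv (A (t 1%N) (t 2%N))) (nuv (A (t 2%N) (t 1%N)))) (Some A2).
  have := pterm_le_alpha hG A (tperm_on (t 1%N) (t 2%N)).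
  by rewrite cT EA2 pterm2 // tpermL tpermR nuv_smul.
move=> [a Ha].
pose B k := st_addscal A (STan (lam k)).
have Nd : forall l k, v k (t l) 0 = hat (sdet (st_minor (B k) (t k) (t l))).
  by move=> l k; rewrite /v /sadj !mxE.
have Bd : forall k z, nuv (B k z z) = omax (nuv (A z z)) (Some (lam k)).
  by move=> k z; rewrite /B /st_addscal mxE eqxx nuv_sadd.
have Bo : forall k z w, z != w -> B k z w = A z w.
  by move=> k z w zw; rewrite /B /st_addscal mxE (negbTE zw).
have lo : forall z : 'I_2, lift z ord0 != z by move=> z; rewrite eq_sym neq_lift.
have Mn : forall k l, nuv (sdet (st_minor (B k) (t k) (t l))) =
    nuv (B k (lift (t k) ord0) (lift (t l) ord0)).
  by move=> k l; rewrite det1 /st_minor mxE !skip_lift.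
have l1 : lift (t 1%N) ord0 = t 2%N by apply: other2 t12 _; exact: lo.
have l2 : lift (t 2%N) ord0 = t 1%N by apply: other2 (t2n) _; exact: lo.
have D1 : ole (Some A1) (nuv (sdet (st_minor (B 1%N) (t 1%N) (t 1%N)))).
  by rewrite Mn l1 Bd L1; exact: ole_omaxr.
have D2 : ole (Some A1) (nuv (sdet (st_minor (B 2%N) (t 2%N) (t 2%N)))).
  by rewrite Mn l2 Bd x11; exact: ole_omaxl.
have V12 : nuv (sdet (st_minor (B 2%N) (t 2%N) (t 1%N))) = nuv (A (t 1%N) (t 2%N)).
  by rewrite Mn l1 l2 Bo.
have V21 : nuv (sdet (st_minor (B 1%N) (t 1%N) (t 2%N))) = nuv (A (t 2%N) (t 1%N)).
  by rewrite Mn l1 l2 Bo // eq_sym.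
have N1 : nuv (sdet (st_minor (B 1%N) (t 1%N) (t 1%N))) <> None.
  by move=> E; move: D1; rewrite E.
have T1 : tangible (smul (STan (a 1%N)) (v 1%N (t 1%N) 0)).
  by rewrite Nd; apply: tang_term.
have N2 : nuv (sdet (st_minor (B 2%N) (t 2%N) (t 2%N))) <> None.
  by move=> E; move: D2; rewrite E.
have T2 : tangible (smul (STan (a 2%N)) (v 2%N (t 2%N) 0)).
  by rewrite Nd; apply: tang_term.
have [k1 k1r /andP[k1l Hk1]] := ghost_row hG (r := index_iota 1 3)
  (F := fun k => smul (STan (a k)) (v k (t 1%N) 0)) (l := 1%N) isT isT T1 (Ha (t 1%N)).
rewrite !nuv_smul !Nd !nuv_hat in Hk1.
have [n1 [m1 [E11 E1k d1 r1]]] := row_fact hG D1 Hk1.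
have [k2 k2r /andP[k2l Hk2]] := ghost_row hG (r := index_iota 1 3)
  (F := fun k => smul (STan (a k)) (v k (t 2%N) 0)) (l := 2%N) isT isT T2 (Ha (t 2%N)).
rewrite !nuv_smul !Nd !nuv_hat in Hk2.
have [n2 [m2 [E22 E2k d2 r2]]] := row_fact hG D2 Hk2.
move: k1r; rewrite /index_iota /= !inE => /orP[/eqP ?|/eqP ?]; subst k1;
  first by rewrite eqxx in k1l.
move: k2r; rewrite /index_iota /= !inE => /orP[/eqP ?|/eqP ?]; subst k2;
  last by rewrite eqxx in k2l.
rewrite V12 in E1k; rewrite V21 in E2k.
have := f4; rewrite E1k E2k /= => h'.
suff : (0 : G) < 0 by rewrite ltxx.
by move: h' f15 r1 d1 r2 d2; lin_close hG.
Qed.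
End F2.

End PropHelpers.
Import PropHelpers.
Unset Implicit Arguments. Set Strict Implicit.

Theorem proposition3p2
  (G : porderZmodType) (hG : ordered_abelian_group G)
  (n : nat) (hn : n = 2 \/ n = 3)
  (A : 'M[stf G]_n)
  (* A is supertropically nonsingular *)
  (hdet : tangible (sdet A))
  (* all coefficients of f_A are tangible *)
  (halpha : forall k, (k <= n)%N -> tangible (st_alpha A k))
  (* the n distinct eigenvalues lambda_1, ..., lambda_n *)
  (lam : nat -> G)
  (heig : forall k, (1 <= k <= n)%N -> st_eigenvalue A (lam k))
  (hdist : forall k l, (1 <= k <= n)%N -> (1 <= l <= n)%N ->
                       lam k = lam l -> k = l)
  (* i_0 = 0 < i_1 < ... < i_n: indices of the st_essential monomials, with
     alpha_{i_(k-1)} x^(n - i_(k-1)) and alpha_{i_k} x^(n - i_k) subsequent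
     st_essential monomials, and lambda_k the corner root between them *)
  (i : nat -> nat)
  (hi0 : i 0%N = 0%N)
  (hiess : forall k, (k <= n)%N -> (i k <= n)%N /\ st_essential A (i k))
  (hisub : forall k, (1 <= k <= n)%N ->
     (i k.-1 < i k)%N /\
     (forall j, (i k.-1 < j < i k)%N -> ~ st_essential A j))
  (hcorner : forall k, (1 <= k <= n)%N ->
     nu_eq (st_monom A (i k.-1) (STan (lam k))) (st_monom A (i k) (STan (lam k))))
  (* t_k in I_{lambda_k} = Ind_{i_k} \ Ind_{i_(k-1)} *)
  (t : nat -> 'I_n)
  (ht : forall k, (1 <= k <= n)%N -> t k \in st_Ind A (i k) :\: st_Ind A (i k.-1)) :
  (* v_k = tangible value of the t_k-th column of adj(A + lambda_k I) *)
  let v : nat -> 'cV[stf G]_n := fun k =>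
    (\col_r hat (sadj (st_addscal A (STan (lam k))) r (t k)))%R in
  st_independent n v.
Proof.
have hinc : forall k, (1 <= k <= n)%N -> (i k.-1 < i k)%N.
  by move=> k hk; exact: (hisub k hk).1.
case: hn => En; subst n.
- exact: (final2 hG halpha hi0 hiess hinc hcorner ht).
- exact: (final3 hG halpha hi0 hiess hinc hcorner ht).
Qed.
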